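(* Let $\mathcal{X}$ be a subset of a normed space, $\mathcal{H}$ an RKHS on $\mathcal{X}$ whose kernel is radial, $\mathfrak{K}(x,y)=\mathfrak{K}_0(\|x-y\|)$ with $\mathfrak{K}_0$ injective, and let $F:\mathcal{X}\to\mathcal{X}$ be a bijection. Then the Koopman operator $\mathcal{K}_F$ on $\mathcal{H}$ is unitary if and only if $F$ is an isometry, i.e. $\|F(x)-F(y)\|=\|x-y\|$ for all $x,y\in\mathcal{X}$.
   Context: $\mathcal{H}$ is a reproducing kernel Hilbert space of complex-valued functions on $\mathcal{X}$ with kernel $\mathfrak{K}$. The Koopman operator is $\mathcal{K}_Fg=g\circ F$ with domain $\{g\in\mathcal{H}:g\circ F\in\mathcal{H}\}$; unitary means bounded, everywhere defined, with $\mathcal{K}_F\mathcal{K}_F^*=\mathcal{K}_F^*\mathcal{K}_F=I$. *)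

(* Defs.v *)
From HB Require Import structures.
From mathcomp Require Import all_boot all_order all_algebra.
From mathcomp Require Import all_classical all_reals all_analysis.
From mathcomp Require Import complex.
Set Implicit Arguments. Unset Strict Implicit. Unset Printing Implicit Defensive.
Import Order.TTheory GRing.Theory Num.Theory.
Import numFieldNormedType.Exports.
Local Open Scope ring_scope.
Local Open Scope classical_set_scope.

(* It is given as a set [rk_carrier] of functions
   X -> C (a linear subspace), an inner product [rk_ip] (linear in the first
   argument, conjugate symmetric, positive definite on the carrier), complete
   for the induced norm, containing the kernel sections kern(.,y), and
   satisfying the reproducing property f y = <f, kern(.,y)>. *)
Record RKHS (C : numClosedFieldType) (X : Type) (kern : X -> X -> C) := {
  rk_carrier : set (X -> C);
  rk_ip : (X -> C) -> (X -> C) -> C;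
  rk_zero : rk_carrier (fun _ => 0);
  rk_add : forall f g, rk_carrier f -> rk_carrier g ->
      rk_carrier (fun x => f x + g x);
  rk_scale : forall (a : C) f, rk_carrier f -> rk_carrier (fun x => a * f x);
  rk_ip_add : forall f g h, rk_carrier f -> rk_carrier g -> rk_carrier h ->
      rk_ip (fun x => f x + g x) h = rk_ip f h + rk_ip g h;
  rk_ip_scale : forall (a : C) f h, rk_carrier f -> rk_carrier h ->
      rk_ip (fun x => a * f x) h = a * rk_ip f h;
  rk_ip_sym : forall f g, rk_carrier f -> rk_carrier g ->
      rk_ip g f = (rk_ip f g)^*;
  rk_ip_ge0 : forall f, rk_carrier f -> 0 <= rk_ip f f;
  rk_ip_eq0 : forall f, rk_carrier f -> rk_ip f f = 0 -> f = (fun _ => 0);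
  rk_complete : forall u : nat -> X -> C, (forall n, rk_carrier (u n)) ->
      (forall e : C, 0 < e -> exists N : nat, forall m n, (N <= m)%N -> (N <= n)%N ->
          rk_ip (fun x => u m x - u n x) (fun x => u m x - u n x) < e) ->
      exists2 f, rk_carrier f &
        (forall e : C, 0 < e -> exists N : nat, forall n, (N <= n)%N ->
          rk_ip (fun x => u n x - f x) (fun x => u n x - f x) < e);
  rk_kernel_mem : forall y, rk_carrier (fun x => kern x y);
  rk_reproducing : forall f y, rk_carrier f -> f y = rk_ip f (fun x => kern x y)
}.

Definition koopman_dom (C : numClosedFieldType) (X : Type) (kern : X -> X -> C)
  (H : RKHS kern) (F : X -> X) : set (X -> C) :=
  [set g | rk_carrier H g /\ rk_carrier H (g \o F)].

(* K_F is unitary: everywhere defined on H, bounded, and it has an adjoint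
   A (an operator on H with <K_F g, h> = <g, A h>) with K_F A = A K_F = I. *)
Definition koopman_unitary (C : numClosedFieldType) (X : Type)
  (kern : X -> X -> C) (H : RKHS kern) (F : X -> X) : Prop :=
  [/\ koopman_dom H F = rk_carrier H,
      exists M : C, forall g, rk_carrier H g ->
         rk_ip H (g \o F) (g \o F) <= M * rk_ip H g g &
      exists A : (X -> C) -> (X -> C),
        [/\ forall h, rk_carrier H h -> rk_carrier H (A h),
            forall g h, rk_carrier H g -> rk_carrier H h ->
               rk_ip H (g \o F) h = rk_ip H g (A h),
            forall h, rk_carrier H h -> (A h) \o F = h &
            forall g, rk_carrier H g -> A (g \o F) = g]].

(* Main.v *)
Set Warnings "-notation-overridden,-ambiguous-paths,-notation-incompatible-prefix".
Require Import Defs.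
From HB Require Import structures.
From mathcomp Require Import all_boot all_order all_algebra.
From mathcomp Require Import all_classical all_reals all_analysis.
From mathcomp Require Import complex.
From mathcomp Require Import ring lra.
Import Order.TTheory GRing.Theory Num.Theory.
Import numFieldNormedType.Exports.
Local Open Scope ring_scope.
Local Open Scope classical_set_scope.
Set Implicit Arguments. Unset Strict Implicit. Unset Printing Implicit Defensive.
Section RK.
Variable R : realType.
Local Notation C := (R[i]).
Variable X : Type.
Variable kern : X -> X -> C.
Variable H : RKHS kern.
Local Notation S := (rk_carrier H).
Local Notation ip := (rk_ip H).

Definition fadd (f g : X -> C) := fun x => f x + g x.
Definition fscl (a : C) (f : X -> C) := fun x => a * f x.
Definition fsub (f g : X -> C) := fun x => f x - g x.
Definition kk (y : X) := fun x => kern x y.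

Lemma memD f g : S f -> S g -> S (fadd f g).
Proof. exact: rk_add. Qed.
Lemma memZ a f : S f -> S (fscl a f).
Proof. exact: rk_scale. Qed.
Lemma fsubE f g : fsub f g = fadd f (fscl (-1) g).
Proof. by apply: funext => x; rewrite /fsub /fadd /fscl mulN1r. Qed.
Lemma memB f g : S f -> S g -> S (fsub f g).
Proof. by move=> Sf Sg; rewrite fsubE; apply: memD => //; apply: memZ. Qed.
Lemma memK y : S (kk y).
Proof. exact: rk_kernel_mem. Qed.

Lemma ipD1 f g h : S f -> S g -> S h -> ip (fadd f g) h = ip f h + ip g h.
Proof. exact: rk_ip_add. Qed.
Lemma ipZ1 a f h : S f -> S h -> ip (fscl a f) h = a * ip f h.
Proof. exact: rk_ip_scale. Qed.
Lemma ipC f g : S f -> S g -> ip g f = (ip f g)^*.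
Proof. exact: rk_ip_sym. Qed.
Lemma ipD2 h f g : S f -> S g -> S h -> ip h (fadd f g) = ip h f + ip h g.
Proof.
move=> Sf Sg Sh; by rewrite (ipC (memD Sf Sg) Sh) ipD1 // rmorphD (ipC Sf Sh) (ipC Sg Sh).
Qed.
Lemma ipZ2 h a f : S f -> S h -> ip h (fscl a f) = a^* * ip h f.
Proof.
move=> Sf Sh; by rewrite (ipC (memZ a Sf) Sh) ipZ1 // rmorphM (ipC Sf Sh).
Qed.
Lemma ipB1 f g h : S f -> S g -> S h -> ip (fsub f g) h = ip f h - ip g h.
Proof.
move=> Sf Sg Sh; rewrite fsubE ipD1 ?ipZ1 ?mulN1r //; exact: memZ.
Qed.
Lemma ipB2 h f g : S f -> S g -> S h -> ip h (fsub f g) = ip h f - ip h g.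
Proof.
move=> Sf Sg Sh; rewrite fsubE ipD2 ?ipZ2 ?rmorphN ?rmorph1 ?mulN1r //; exact: memZ.
Qed.
Lemma ipK y f : S f -> ip f (kk y) = f y.
Proof. by move=> Sf; rewrite -rk_reproducing. Qed.
Lemma ip_real f : S f -> (ip f f)^* = ip f f.
Proof. by move=> Sf; rewrite -ipC. Qed.

Definition Nn f := complex.Re (ip f f).
Definition Qn (z : C) := complex.Re (z * z^*).

Lemma real_of (z : C) : z^* = z -> z = (complex.Re z)%:C%C.
Proof. by move=> hz; rewrite RRe_real // CrealE hz. Qed.

Lemma NnE f : S f -> ip f f = (Nn f)%:C%C.
Proof. by move=> Sf; apply: real_of; rewrite ip_real. Qed.
Lemma QnE z : z * z^* = (Qn z)%:C%C.
Proof. by apply: real_of; rewrite rmorphM /= conjCK mulrC. Qed.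
Lemma Nn_ge0 f : S f -> 0 <= Nn f.
Proof. by move=> Sf; rewrite -ler0c -NnE //; apply: rk_ip_ge0. Qed.
Lemma Qn_ge0 z : 0 <= Qn z.
Proof. by rewrite -ler0c -QnE mul_conjC_ge0. Qed.
Lemma Qn_eq0 z : Qn z = 0 -> z = 0.
Proof.
move=> h; have : z * z^* = 0 by rewrite QnE h.
by move/eqP; rewrite mulf_eq0 conjC_eq0 orbb => /eqP.
Qed.
Lemma QnN z : Qn (- z) = Qn z.
Proof. by rewrite /Qn rmorphN mulrNN. Qed.
Lemma QnJ z : Qn (z^*) = Qn z.
Proof. by rewrite /Qn conjCK mulrC. Qed.
Lemma Qn_add a b : Qn (a + b) <= 2 * Qn a + 2 * Qn b.
Proof.
have h : (a + b) * (a + b)^* + (a - b) * (a - b)^* = 2 * (a * a^*) + 2 * (b * b^*).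
  rewrite !rmorphD !rmorphN /=; ring.
have h2 : ((Qn (a + b)) + Qn (a - b))%:C%C = (2 * Qn a + 2 * Qn b)%:C%C.
  rewrite !rmorphD !rmorphM /= -!QnE h.
  by rewrite (_ : (2 : R)%:C%C = 2) // rmorph_nat.
have /complexI h' := h2.
by rewrite -h' lerDl Qn_ge0.
Qed.
Lemma Qn_small z : (forall e : R, 0 < e -> Qn z < e) -> z = 0.
Proof.
move=> h; apply: Qn_eq0; apply/eqP; rewrite eq_le Qn_ge0 andbT.
by rewrite leNgt; apply/negP => /h; rewrite ltxx.
Qed.


Lemma ip_expand u v c : S u -> S v ->
  ip (fsub u (fscl c v)) (fsub u (fscl c v)) =
  ip u u - c^* * ip u v - c * (ip u v)^* + c * c^* * ip v v.
Proof.
move=> Su Sv; have Scv := memZ c Sv.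
have Sd := memB Su Scv.
rewrite ipB1 // (ipB2 Su Scv Su) (ipB2 Su Scv Scv) !ipZ1 // !ipZ2 // (ipC Su Sv).
rewrite /=; ring.
Qed.

Lemma keyC u v : S u -> S v ->
  ip (fsub u (fscl (ip u v / (ip v v + 1)) v)) (fsub u (fscl (ip u v / (ip v v + 1)) v))
   + ip u v * (ip u v)^* / (ip v v + 1) <= ip u u.
Proof.
move=> Su Sv; set w := ip u v; set c := w / _; rewrite ip_expand //.
have K0 : 0 <= ip v v by apply: rk_ip_ge0.
have K1 : 0 < ip v v + 1 by rewrite ltr_wpDl.
have K1n : ip v v + 1 != 0 by rewrite gt_eqF.
have Kr : (ip v v + 1)^* = ip v v + 1 by rewrite rmorphD /= ip_real // conjC1.
have cJ : c^* = w^* / (ip v v + 1) by rewrite /c fmorph_div /= Kr.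
rewrite cJ -subr_ge0.
have -> : ip u u - (ip u u - w^* / (ip v v + 1) * w - c * w^* +
     c * (w^* / (ip v v + 1)) * ip v v + w * w^* / (ip v v + 1))
   = w * w^* / ((ip v v + 1) ^+ 2).
  by rewrite /c; field.
by rewrite divr_ge0 ?mul_conjC_ge0 // exprn_ge0 // ltW.
Qed.

Lemma keyR u v : S u -> S v ->
  Nn (fsub u (fscl (ip u v / (ip v v + 1)) v)) + Qn (ip u v) / (Nn v + 1) <= Nn u.
Proof.
move=> Su Sv; have := keyC Su Sv; set w := ip u v; set c := w / _.
have Sc : S (fsub u (fscl c v)) by apply: memB => //; apply: memZ.
rewrite !NnE // QnE.
rewrite -lecR; congr (_ <= _).
by rewrite rmorphD /= fmorph_div /= rmorphD /= rmorph1.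
Qed.

Lemma Qn_ip u v : S u -> S v -> Qn (ip u v) <= (Nn v + 1) * Nn u.
Proof.
move=> Su Sv; have := keyR Su Sv.
have Sc : S (fsub u (fscl (ip u v / (ip v v + 1)) v)) by apply: memB => //; apply: memZ.
have := Nn_ge0 Sc; have := Nn_ge0 Sv => h1 h2 h3.
have h4 : Qn (ip u v) / (Nn v + 1) <= Nn u.
  by apply: le_trans h3; rewrite lerDr.
by rewrite mulrC -ler_pdivrMr // ltr_wpDl.
Qed.

Lemma Qn_eval u y : S u -> Qn (u y) <= (Nn (kk y) + 1) * Nn u.
Proof. by move=> Su; rewrite -(ipK y Su); apply: Qn_ip => //; apply: memK. Qed.

Lemma ipKl y h : S h -> ip (kk y) h = (h y)^*.
Proof. by move=> Sh; rewrite (ipC Sh (memK y)) ipK. Qed.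

Definition ev (l : seq (C * X)) : X -> C := fun x => \sum_(p <- l) p.1 * kern x p.2.

Lemma ev_nil : ev [::] = fun _ => 0.
Proof. by apply: funext => x; rewrite /ev big_nil. Qed.
Lemma ev_cons p l : ev (p :: l) = fadd (fscl p.1 (kk p.2)) (ev l).
Proof. by apply: funext => x; rewrite /ev big_cons. Qed.

Lemma mem_ev l : S (ev l).
Proof.
elim: l => [|p l IH]; first by rewrite ev_nil; apply: rk_zero.
by rewrite ev_cons; apply: memD => //; apply: memZ; apply: memK.
Qed.

Lemma ip0 h : S h -> ip (fun _ => 0) h = 0.
Proof.
move=> Sh; have -> : (fun _ : X => 0 : C) = fscl 0 h.
  by apply: funext => x; rewrite /fscl mul0r.
by rewrite ipZ1 // mul0r.
Qed.

Lemma ip_ev l h : S h -> ip (ev l) h = \sum_(p <- l) p.1 * (h p.2)^*.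
Proof.
move=> Sh; elim: l => [|p l IH]; first by rewrite ev_nil ip0 // big_nil.
have Sk := memZ p.1 (memK p.2).
rewrite ev_cons (ipD1 Sk (mem_ev l) Sh) (ipZ1 _ (memK p.2) Sh).
by rewrite ipKl // IH big_cons.
Qed.

Definition lscl (a : C) (l : seq (C * X)) := map (fun p => (a * p.1, p.2)) l.
Definition lsub l m := l ++ lscl (-1) m.

Lemma ev_cat l m : ev (l ++ m) = fadd (ev l) (ev m).
Proof. by apply: funext => x; rewrite /ev /fadd big_cat. Qed.
Lemma ev_scl a l : ev (lscl a l) = fscl a (ev l).
Proof.
apply: funext => x; rewrite /ev /fscl big_map mulr_sumr.
by apply: eq_bigr => p _ /=; rewrite mulrA.
Qed.
Lemma ev_sub l m : ev (lsub l m) = fsub (ev l) (ev m).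
Proof. by rewrite /lsub ev_cat ev_scl fsubE. Qed.

Lemma Nn_par a b : S a -> S b ->
  Nn (fadd a b) + Nn (fsub a b) = 2 * Nn a + 2 * Nn b.
Proof.
move=> Sa Sb; have Sab := memD Sa Sb; have Sab' := memB Sa Sb.
have h : ip (fadd a b) (fadd a b) + ip (fsub a b) (fsub a b) =
   2 * ip a a + 2 * ip b b.
  rewrite (ipD1 Sa Sb Sab) (ipB1 Sa Sb Sab') (ipD2 Sa Sb Sa) (ipD2 Sa Sb Sb).
  rewrite (ipB2 Sa Sb Sa) (ipB2 Sa Sb Sb) (ipC Sa Sb); ring.
apply: complexI; rewrite !rmorphD !rmorphM /= rmorph_nat -!NnE //.
Qed.

Lemma Nn_addle a b : S a -> S b -> Nn (fadd a b) <= 2 * Nn a + 2 * Nn b.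
Proof.
move=> Sa Sb; rewrite -Nn_par // lerDl; apply: Nn_ge0; exact: memB.
Qed.

Lemma Nn_scl c f : S f -> Nn (fscl c f) = Qn c * Nn f.
Proof.
move=> Sf; rewrite /Nn (ipZ1 c Sf (memZ c Sf)) (ipZ2 c Sf Sf) mulrA QnE NnE //.
by rewrite -rmorphM.
Qed.

Lemma Nn_sym a b : S a -> S b -> Nn (fsub a b) = Nn (fsub b a).
Proof.
move=> Sa Sb; have -> : fsub b a = fscl (-1) (fsub a b).
  by apply: funext => x; rewrite /fsub /fscl mulN1r opprB.
rewrite Nn_scl; last exact: memB.
by rewrite /Qn rmorphN rmorph1 mulrNN mulr1 mul1r.
Qed.

Lemma Nn_tri a b c : S a -> S b -> S c ->
  Nn (fsub a b) <= 2 * Nn (fsub a c) + 2 * Nn (fsub c b).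
Proof.
move=> Sa Sb Sc; have -> : fsub a b = fadd (fsub a c) (fsub c b).
  by apply: funext => x; rewrite /fsub /fadd addrA subrK.
by apply: Nn_addle; apply: memB.
Qed.

Lemma Qn2 : Qn 2 = 4.
Proof. by rewrite /Qn conjC_nat -natrM. Qed.

Lemma small_inv (e : R) : 0 < e -> exists N : nat, forall n, (N <= n)%N -> (n.+1%:R)^-1 < e.
Proof.
move=> e0; have ei : 0 <= e^-1 by rewrite invr_ge0 ltW.
have h := archi_boundP ei.
exists (Num.Def.archi_bound e^-1) => n hn.
rewrite invf_plt ?posrE ?ltr0Sn //.
apply: (lt_le_trans h); rewrite ler_nat; by apply: leq_trans hn _.
Qed.

Lemma realC_pos (e : C) : 0 < e -> e = (complex.Re e)%:C%C /\ 0 < complex.Re e.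
Proof.
move=> e0; have er : e = (complex.Re e)%:C%C.
  by rewrite RRe_real // gtr0_real.
by split=> //; rewrite -ltcR -er.
Qed.

Definition cvN (t : nat -> X -> C) (h : X -> C) :=
  forall e : R, 0 < e -> exists N : nat, forall n, (N <= n)%N -> Nn (fsub (t n) h) < e.

Lemma limit_ident (t : nat -> X -> C) (h : X -> C) : (forall n, S (t n)) ->
  (forall e : R, 0 < e -> exists N : nat, forall m n, (N <= m)%N -> (N <= n)%N ->
     Nn (fsub (t m) (t n)) < e) ->
  (forall x (e : R), 0 < e -> exists N : nat, forall n, (N <= n)%N -> Qn (t n x - h x) < e) ->
  S h /\ cvN t h.
Proof.
move=> St Hc Hp.
have HcC : forall e : C, 0 < e -> exists N : nat, forall m n, (N <= m)%N -> (N <= n)%N ->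
   ip (fun x => t m x - t n x) (fun x => t m x - t n x) < e.
  move=> e /realC_pos [er e0]; have [N HN] := Hc _ e0; exists N => m n hm hn.
  change (ip (fsub (t m) (t n)) (fsub (t m) (t n)) < e).
  rewrite NnE; last by apply: memB.
  by rewrite [X in _ < X]er ltcR HN.
have [q Sq Hq] := rk_complete St HcC.
have cq : cvN t q.
  move=> e e0; have e0' : 0 < (e%:C%C : C) by rewrite ltcR.
  have [N HN] := Hq _ e0'; exists N => n hn.
  have := HN n hn; change (ip (fsub (t n) q) (fsub (t n) q) < e%:C%C -> Nn (fsub (t n) q) < e).
  rewrite NnE; last by apply: memB.
  by rewrite ltcR.
suff hq : h = q by rewrite hq.
apply: funext => x; apply/eqP; rewrite -subr_eq0; apply/eqP; apply: Qn_small => e e0.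
set k := Nn (kk x) + 1.
have k0 : 0 < k by apply: ltr_wpDl; [apply: Nn_ge0; apply: memK | exact: ltr01].
have f0 : (0 : R) < 4 by lra.
have [N1 HN1] := cq (e / (4 * k)) (divr_gt0 e0 (mulr_gt0 f0 k0)).
have [N2 HN2] := Hp x (e / 4) (divr_gt0 e0 f0).
have h1 := HN1 (maxn N1 N2) (leq_maxl _ _).
have h2 := HN2 (maxn N1 N2) (leq_maxr _ _).
set n := maxn N1 N2 in h1 h2.
have h3 := Qn_eval x (memB (St n) Sq); rewrite -/k in h3.
have h4 : k * Nn (fsub (t n) q) < e / 4.
  have -> : e / 4 = k * (e / (4 * k)) by field; rewrite gt_eqF.
  by rewrite ltr_pM2l.
have h5 : h x - q x = (t n x - q x) + - (t n x - h x) by ring.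
rewrite h5; apply: (le_lt_trans (Qn_add _ _)); rewrite QnN.
change (Qn (fsub (t n) q x)) with (Qn (t n x - q x)) in h3.
lra.
Qed.

Lemma approx g : S g -> exists l : nat -> seq (C * X), cvN (fun n => ev (l n)) g.
Proof.
move=> Sg.
have Sev l : S (fsub g (ev l)) by apply: memB => //; exact: mem_ev.
pose D := [set r : R | exists l, r = Nn (fsub g (ev l))].
have D0 : D (Nn (fsub g (ev [::]))) by exists [::].
have Dlb : has_lbound D by exists 0 => r [l ->]; apply: Nn_ge0.
have [d [hd hex]] : exists d : R, (forall l, d <= Nn (fsub g (ev l))) /\
    (forall n : nat, exists l, Nn (fsub g (ev l)) < d + (n.+1%:R)^-1).
  exists (inf D); split.
    by move=> l; apply: ge_inf => //; exists l.
  have hinf : has_inf D by split => //; exists (Nn (fsub g (ev [::]))).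
  move=> n; have hn : (0 : R) < (n.+1%:R)^-1 by rewrite invr_gt0 ltr0Sn.
  by have [r [l ->] hr] := inf_adherent hn hinf; exists l.
case: (choice hex) => ls Hls.
pose t := fun n => ev (ls n).
have St n : S (t n) := mem_ev _.
have Su n : S (fsub g (t n)) := Sev _.
have Hp : forall x (e : R), 0 < e -> exists N : nat, forall n, (N <= n)%N -> Qn (t n x - g x) < e.
  move=> x e e0; set k := Nn (kk x) + 1.
  have k0 : 0 < k by apply: ltr_wpDl; [apply: Nn_ge0; apply: memK | exact: ltr01].
  have [N HN] := small_inv (divr_gt0 e0 k0); exists N => n hn.
  have := keyR (Su n) (memK x); set c := _ / _.
  have -> : fsub (fsub g (t n)) (fscl c (kk x)) = fsub g (ev (ls n ++ [:: (c, x)])).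
    apply: funext => y; rewrite ev_cat /fsub /fadd /fscl /t /ev big_cons big_nil /kk /=; ring.
  rewrite ipK // -/k => h1.
  have h2 := hd (ls n ++ [:: (c, x)]).
  have h3 : Nn (fsub g (t n)) < d + (n.+1%:R)^-1 := Hls n.
  have h4 := HN n hn.
  have h5 : Qn (fsub g (t n) x) / k < e / k.
    move: h1 h2 h3 h4; move: (Qn (fsub g (t n) x) / k) (e / k) (Nn (fsub g (ev (ls n ++ [:: (c, x)])))) (Nn (fsub g (t n))) (n.+1%:R^-1 : R) => q ek a b r; lra.
  rewrite ltr_pM2r ?invr_gt0 // in h5.
  by rewrite -QnN opprB.
have Hc : forall e : R, 0 < e -> exists N : nat, forall m n, (N <= m)%N -> (N <= n)%N ->
     Nn (fsub (t m) (t n)) < e.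
  move=> e e0; have f0 : (0 : R) < 4 by lra.
  have [N HN] := small_inv (divr_gt0 e0 f0); exists N => m n hm hn.
  have := Nn_par (Su n) (Su m).
  have -> : fadd (fsub g (t n)) (fsub g (t m)) =
      fscl 2 (fsub g (ev (lscl (1/2) (ls n ++ ls m)))).
    apply: funext => y; rewrite ev_scl ev_cat /fadd /fscl /fsub /t.
    have h2 : (2 : C) != 0 by rewrite pnatr_eq0.
    by field.
  have -> : fsub (fsub g (t n)) (fsub g (t m)) = fsub (t m) (t n).
    by apply: funext => y; rewrite /fsub; ring.
  rewrite Nn_scl ?Qn2; last exact: Sev.
  have := hd (lscl (1/2) (ls n ++ ls m)).
  have : Nn (fsub g (t n)) < d + (n.+1%:R)^-1 := Hls n.
  have : Nn (fsub g (t m)) < d + (m.+1%:R)^-1 := Hls m.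
  have := HN m hm; have := HN n hn.
  move: (Nn (fsub g (t n))) (Nn (fsub g (t m))) (Nn (fsub g (ev (lscl (1/2) (ls n ++ ls m)))))
    (Nn (fsub (t m) (t n))) (n.+1%:R^-1 : R) (m.+1%:R^-1 : R) => a b c u r1 r2.
  lra.
exists ls; exact: (limit_ident St Hc Hp).2.
Qed.

Section Comp.
Variables (F G : X -> X).
Hypothesis FG : cancel F G.
Hypothesis GF : cancel G F.
Hypothesis inv : forall x y, kern (F x) (F y) = kern x y.

Lemma kernF x y : kern (F x) y = kern x (G y).
Proof. by rewrite -{1}(GF y) inv. Qed.

Definition lmap (l : seq (C * X)) := map (fun p => (p.1, G p.2)) l.

Lemma ev_comp l : (ev l) \o F = ev (lmap l).
Proof.
apply: funext => x; rewrite /ev /lmap big_map /=.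
by apply: eq_bigr => p _; rewrite kernF.
Qed.

Lemma ip_evF l m : ip (ev l \o F) (ev m \o F) = ip (ev l) (ev m).
Proof.
rewrite !ev_comp (ip_ev _ (mem_ev _)) (ip_ev _ (mem_ev _)) /lmap big_map.
apply: eq_bigr => p _ /=; congr (_ * _).
by rewrite -/(lmap m) -ev_comp /= GF.
Qed.

Lemma comp_cv g l : S g -> cvN (fun n => ev (l n)) g ->
  S (g \o F) /\ cvN (fun n => ev (l n) \o F) (g \o F).
Proof.
move=> Sg Hl; apply: limit_ident.
- by move=> n; rewrite ev_comp; apply: mem_ev.
- move=> e e0; have f0 : (0 : R) < 4 by lra.
  have [N HN] := Hl _ (divr_gt0 e0 f0); exists N => m n hm hn.
  have -> : fsub (ev (l m) \o F) (ev (l n) \o F) = ev (lsub (l m) (l n)) \o F.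
    by apply: funext => x; rewrite ev_sub.
  rewrite /Nn ip_evF -/(Nn _) ev_sub.
  apply: le_lt_trans (Nn_tri (mem_ev (l m)) (mem_ev (l n)) Sg) _.
  rewrite -(Nn_sym (mem_ev (l n)) Sg).
  have := HN m hm; have := HN n hn.
  move: (Nn (fsub (ev (l m)) g)) (Nn (fsub (ev (l n)) g)) => a b; lra.
- move=> x e e0; set k := Nn (kk (F x)) + 1.
  have k0 : 0 < k by apply: ltr_wpDl; [apply: Nn_ge0; apply: memK | exact: ltr01].
  have [N HN] := Hl _ (divr_gt0 e0 k0); exists N => n hn.
  have h1 := Qn_eval (F x) (memB (mem_ev (l n)) Sg); rewrite -/k in h1.
  apply: (le_lt_trans h1).
  have -> : e = k * (e / k) by field; rewrite gt_eqF.
  by rewrite ltr_pM2l // HN.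
Qed.

End Comp.

Lemma ip_cont (a b : nat -> X -> C) a0 b0 : (forall n, S (a n)) -> (forall n, S (b n)) ->
  S a0 -> S b0 -> cvN a a0 -> cvN b b0 ->
  forall e : R, 0 < e -> exists N : nat, forall n, (N <= n)%N ->
    Qn (ip (a n) (b n) - ip a0 b0) < e.
Proof.
move=> Sa Sb Sa0 Sb0 ca cb e e0.
set K := Nn a0 + 1; set M := 2 * Nn b0 + 3.
have K0 : 0 < K by apply: ltr_wpDl; [apply: Nn_ge0 | exact: ltr01].
have M0 : 0 < M by have := Nn_ge0 Sb0; rewrite /M; lra.
have f0 : (0 : R) < 4 by lra.
have [N1 H1] := cb _ ltr01.
have [N2 H2] := cb _ (divr_gt0 e0 (mulr_gt0 f0 K0)).
have [N3 H3] := ca _ (divr_gt0 e0 (mulr_gt0 f0 M0)).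
exists (maxn N1 (maxn N2 N3)) => n hn.
have hn1 : (N1 <= n)%N by apply: leq_trans hn; apply: leq_maxl.
have hn2 : (N2 <= n)%N by apply: leq_trans hn; rewrite leq_max leq_maxl orbT.
have hn3 : (N3 <= n)%N by apply: leq_trans hn; rewrite leq_max leq_maxr orbT.
have Sda := memB (Sa n) Sa0; have Sdb := memB (Sb n) Sb0.
have -> : ip (a n) (b n) - ip a0 b0 =
    ip (fsub (a n) a0) (b n) + ip a0 (fsub (b n) b0).
  by rewrite ipB1 // ipB2 //; ring.
apply: (le_lt_trans (Qn_add _ _)).
have q1 := Qn_ip Sda (Sb n).
have q2 : Qn (ip a0 (fsub (b n) b0)) <= K * Nn (fsub (b n) b0).
  by rewrite (ipC Sdb Sa0) QnJ; apply: Qn_ip.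
have nb : Nn (b n) <= 2 * Nn (fsub (b n) b0) + 2 * Nn b0.
  have e' : b n = fadd (fsub (b n) b0) b0.
    by apply: funext => x; rewrite /fadd /fsub subrK.
  by rewrite {1}e'; apply: Nn_addle.
have al0 := Nn_ge0 Sda.
have be1 := H1 n hn1; have be2 := H2 n hn2; have al := H3 n hn3.
have s1 : (Nn (b n) + 1) * Nn (fsub (a n) a0) <= M * Nn (fsub (a n) a0).
  by apply: ler_wpM2r => //; rewrite /M; lra.
have s2 : M * Nn (fsub (a n) a0) < e / 4.
  have -> : e / 4 = M * (e / (4 * M)) by field; rewrite gt_eqF.
  by rewrite ltr_pM2l.
have s3 : K * Nn (fsub (b n) b0) < e / 4.
  have -> : e / 4 = K * (e / (4 * K)) by field; rewrite gt_eqF.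
  by rewrite ltr_pM2l.
move: q1 q2 s1 s2 s3.
move: (Qn (ip (fsub (a n) a0) (b n))) (Qn (ip a0 (fsub (b n) b0)))
  ((Nn (b n) + 1) * Nn (fsub (a n) a0)) (M * Nn (fsub (a n) a0))
  (K * Nn (fsub (b n) b0)) => x1 x2 y1 y2 y3.
lra.
Qed.

Lemma lim_unique (z : nat -> C) L1 L2 :
  (forall e : R, 0 < e -> exists N : nat, forall n, (N <= n)%N -> Qn (z n - L1) < e) ->
  (forall e : R, 0 < e -> exists N : nat, forall n, (N <= n)%N -> Qn (z n - L2) < e) ->
  L1 = L2.
Proof.
move=> h1 h2; apply/eqP; rewrite -subr_eq0; apply/eqP; apply: Qn_small => e e0.
have f0 : (0 : R) < 4 by lra.
have [N1 H1] := h1 _ (divr_gt0 e0 f0); have [N2 H2] := h2 _ (divr_gt0 e0 f0).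
have a1 := H1 _ (leq_maxl N1 N2); have a2 := H2 _ (leq_maxr N1 N2).
set n := maxn N1 N2 in a1 a2.
have -> : L1 - L2 = - (z n - L1) + (z n - L2) by ring.
apply: (le_lt_trans (Qn_add _ _)); rewrite QnN.
move: a1 a2; move: (Qn (z n - L1)) (Qn (z n - L2)) => u v; lra.
Qed.

Lemma iso_comp F G : cancel F G -> cancel G F ->
  (forall x y, kern (F x) (F y) = kern x y) ->
  forall g h, S g -> S h -> S (g \o F) /\ ip (g \o F) (h \o F) = ip g h.
Proof.
move=> FG GF inv g h Sg Sh.
have [l cl] := approx Sg; have [m cm] := approx Sh.
have [SgF clF] := comp_cv GF inv Sg cl.
have [ShF cmF] := comp_cv GF inv Sh cm.
split => //.
have SlF n : S (ev (l n) \o F) by rewrite (ev_comp GF inv); apply: mem_ev.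
have SmF n : S (ev (m n) \o F) by rewrite (ev_comp GF inv); apply: mem_ev.
have c1 := ip_cont SlF SmF SgF ShF clF cmF.
have c2 := ip_cont (fun n => mem_ev (l n)) (fun n => mem_ev (m n)) Sg Sh cl cm.
apply: (lim_unique (z := fun n => ip (ev (l n)) (ev (m n)))) => // e e0.
have [N HN] := c1 e e0; exists N => n hn.
by rewrite -(ip_evF GF inv); apply: HN.
Qed.

Lemma unitary_of F G : cancel F G -> cancel G F ->
  (forall x y, kern (F x) (F y) = kern x y) -> koopman_unitary H F.
Proof.
move=> FG GF inv.
have invG : forall x y, kern (G x) (G y) = kern x y by move=> x y; rewrite -inv !GF.
have isoF g h : S g -> S h -> S (g \o F) /\ ip (g \o F) (h \o F) = ip g h.
  exact: iso_comp.
have isoG g h : S g -> S h -> S (g \o G) /\ ip (g \o G) (h \o G) = ip g h.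
  exact: iso_comp.
split.
- rewrite /koopman_dom; apply: funext => g; apply: propext; split; first by case.
  by move=> Sg; split => //; case: (isoF g g Sg Sg).
- by exists 1 => g Sg; rewrite mul1r (isoF g g Sg Sg).2.
- exists (fun h => h \o G); split.
  + by move=> h Sh; case: (isoG h h Sh Sh).
  + move=> g h Sg Sh.
    have ShG : S (h \o G) by case: (isoG h h Sh Sh).
    rewrite -(isoF g (h \o G) Sg ShG).2; congr (ip _ _).
    by apply: funext => x /=; rewrite FG.
  + by move=> h Sh; apply: funext => x /=; rewrite FG.
  + by move=> g Sg; apply: funext => x /=; rewrite GF.
Qed.

Lemma inv_of_unitary F : koopman_unitary H F ->
  forall x y, kern (F x) (F y) = kern x y.
Proof.
case=> Hdom _ [A [SA Hadj HAF HFA]] x y.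
have SF g : S g -> S (g \o F).
  move=> Sg; have hk : koopman_dom H F g by rewrite Hdom.
  by case: hk.
set a := A (kk y); set b := kk (F y).
have Sa : S a := SA _ (memK y).
have Sb : S b := memK (F y).
have E g : S g -> ip g a = ip g b.
  move=> Sg; rewrite /a -Hadj //; last exact: memK.
  by rewrite (ipK y (SF _ Sg)) /b (ipK (F y) Sg).
have Sd := memB Sa Sb.
have hd : ip (fsub a b) (fsub a b) = 0 by rewrite ipB2 // E // subrr.
have := rk_ip_eq0 Sd hd => /(congr1 (fun f => f (F x))).
rewrite /fsub => /eqP; rewrite subr_eq0 => /eqP hab.
have := congr1 (fun f => f x) (HAF _ (memK y)); rewrite /= -/a hab /b /kk.
by move=> ->.
Qed.

End RK.

Theorem mainTheorem19 (R : realType) (V : normedModType R) (Xs : set V)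
  (K0 : R -> R[i])
  (K0_inj : forall r s : R, 0 <= r -> 0 <= s -> K0 r = K0 s -> r = s)
  (H : RKHS (fun x y : {x : V | Xs x} => K0 `|sval x - sval y|))
  (F : {x : V | Xs x} -> {x : V | Xs x}) (F_bij : bijective F) :
  koopman_unitary H F <->
  (forall x y : {x : V | Xs x}, `|sval (F x) - sval (F y)| = `|sval x - sval y|).
Proof.
case: F_bij => G FG GF; split.
- move=> HU x y; have := inv_of_unitary HU x y => /= h.
  by apply: K0_inj => //; apply: normr_ge0.
- move=> Hiso; refine (unitary_of H FG GF _) => x y /=.
  by rewrite Hiso.
Qed.
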